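(* Let $R$ be a commutative Noetherian ring, $s\in R$ and $r\ge2$. Then there exists $k\in\mathbb{N}$ such that for every column $b^+=(b_1,\ldots,b_r)^t\in R^r$ with $s\in\langle b_1,\ldots,b_r\rangle$ and every column $b^-=(b_{-r},\ldots,b_{-1})^t\in R^r$ such that $\sum_{i=1}^rb_ib_{-i}=0$ and every entry $b_{-i}$ is divisible by $s^k$, there exists $M\in\Theta(r,R)$ with $b^-=Mb^+$.
   Context: For an $r\times r$ matrix $g$ with rows and columns indexed $1,\ldots,r$, its antidiagonal transpose $g^{\tau}$ has entries $(g^\tau)_{i,j}=g_{r+1-j,r+1-i}$. $\Theta(r,R)$ is the set of $r\times r$ matrices $M$ over $R$ with $M^{\tau}=-M$ and all antidiagonal entries $M_{i,r+1-i}$ equal to zero. *)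

(* Defs.v *)
From mathcomp Require Import all_boot all_order all_algebra.
Set Implicit Arguments. Unset Strict Implicit. Unset Printing Implicit Defensive.
Import GRing.Theory.
Local Open Scope ring_scope.

Definition is_ideal (R : comRingType) (I : R -> Prop) : Prop :=
  [/\ I 0, (forall x y, I x -> I y -> I (x + y)) & (forall a x, I x -> I (a * x))].

Definition noetherian (R : comRingType) : Prop :=
  forall I : nat -> R -> Prop,
    (forall n, is_ideal (I n)) ->
    (forall n x, I n x -> I n.+1 x) ->
    exists N, forall n, (N <= n)%N -> forall x, I n x <-> I N x.

(* Antidiagonal transpose: (g^tau)_{i,j} = g_{r+1-j, r+1-i} (0-indexed: rev_ord). *)
Definition antitr (R : Type) (r : nat) (g : 'M[R]_r) : 'M[R]_r :=
  \matrix_(i, j) g (rev_ord j) (rev_ord i).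

Definition inTheta (R : comRingType) (r : nat) (M : 'M[R]_r) : Prop :=
  antitr M = - M /\ (forall i : 'I_r, M i (rev_ord i) = 0).

(* Main.v *)
Require Import Defs.
From mathcomp Require Import all_boot all_order all_algebra.
Local Open Scope ring_scope.
Import GRing.Theory.

(* bp i = b_{i+1};  bm j = b_{-(r-j)} (0-indexed), so b_{-(i+1)} = bm (rev_ord i). *)
Theorem lemma11 (R : comRingType) (s : R) (r : nat) :
  noetherian R -> (2 <= r)%N ->
  exists k : nat,
    forall bp bm : 'cV[R]_r,
      (exists a : 'I_r -> R, s = \sum_(i < r) a i * bp i 0) ->
      \sum_(i < r) bp i 0 * bm (rev_ord i) 0 = 0 ->
      (forall i : 'I_r, exists c : R, bm i 0 = s ^+ k * c) ->
      exists M : 'M[R]_r, inTheta M /\ bm = M *m bp.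
Proof.
move=> hN _.
have hI : forall n, is_ideal (fun x : R => s ^+ n * x = 0).
  move=> n; split.
  + by rewrite mulr0.
  + by move=> x y hx hy; rewrite mulrDr hx hy addr0.
  + by move=> a x hx; rewrite mulrCA hx mulr0.
have hC : forall n x, s ^+ n * x = 0 -> s ^+ n.+1 * x = 0.
  by move=> n x hx; rewrite exprS -mulrA hx mulr0.
have [N HN] := hN (fun n x => s ^+ n * x = 0) hI hC.
exists N.+1 => bp bm [a ha] hsum hdiv.
have [c hc] := fin_all_exists hdiv.
pose d i := s ^+ N * c i.
have hbd : forall i, bm i 0 = s * d i by move=> i; rewrite hc /d exprS mulrA.
have hd0 : \sum_(i < r) bp i 0 * d (rev_ord i) = 0.
  have h1 : s ^+ N.+1 * (\sum_(i < r) bp i 0 * c (rev_ord i)) = 0.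
    rewrite mulr_sumr -[RHS]hsum; apply: eq_bigr => i _.
    by rewrite hc mulrCA.
  have h2 : s ^+ N * (\sum_(i < r) bp i 0 * c (rev_ord i)) = 0.
    by apply/(HN N.+1 (leqnSn N)).
  rewrite -[RHS]h2 mulr_sumr; apply: eq_bigr => i _.
  by rewrite /d mulrCA.
exists (\matrix_(p, q) (d p * a q - d (rev_ord q) * a (rev_ord p))).
split; first split.
- apply/matrixP => i j; rewrite /antitr !mxE !rev_ordK.
  by rewrite opprB mulrC [d i * _]mulrC.
- by move=> i; rewrite mxE rev_ordK subrr.
- apply/matrixP => p z; rewrite (ord1 z) !mxE.
  under eq_bigr => q _ do rewrite mxE mulrBl.
  rewrite sumrB hbd.
  have -> : \sum_(q < r) d p * a q * bp q 0 = d p * s.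
    by rewrite ha mulr_sumr; apply: eq_bigr => q _; rewrite mulrA.
  have -> : \sum_(q < r) d (rev_ord q) * a (rev_ord p) * bp q 0 = 0.
    rewrite -[RHS](mulr0 (a (rev_ord p))) -[in RHS]hd0 mulr_sumr; apply: eq_bigr => q _.
    by rewrite [d _ * a _]mulrC -mulrA [d _ * bp _ _]mulrC.
  by rewrite subr0 mulrC.
Qed.
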